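(* Let $K$ be a field of characteristic zero, let $A=K[Y][X;\mathrm{id}_{K[Y]},\frac{d}{dY}]$ be the first Weyl algebra, and for $k\in K$ let $\alpha_k\colon A\to A$ be the $K$-linear map with $\alpha_k(p(Y)X^m)=p(Y+k)X^m$ for all $p(Y)\in K[Y]$, $m\in\mathbb{N}$. Define $u*v:=\alpha_k(u\cdot v)$ for $u,v\in A$. Then for every $k\in K$ the hom-associative algebra $(A,*,\alpha_k)$ is simple, i.e. its only two-sided ideals (with respect to $*$) are $0$ and $A$.
   Context: The first Weyl algebra $A=K[Y][X;\mathrm{id}_{K[Y]},\frac{d}{dY}]$ consists of the polynomials $\sum_{i}p_i(Y)X^i$ with $p_i\in K[Y]$, with the associative multiplication determined by $p(Y)X^m\cdot q(Y)X^n=\sum_{i=0}^m\binom{m}{i}p(Y)q^{(m-i)}(Y)X^{i+n}$ (so $XY-YX=1$). $\mathbb{N}$ denotes the non-negative integers. An ideal of $(A,* )$ is an additive subgroup (indeed $K$-subspace) $I$ with $A*I\subseteq I$ and $I*A\subseteq I$. *)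

(* Defs.v *)
From HB Require Import structures.
From mathcomp Require Import all_boot all_order all_algebra.
Set Implicit Arguments. Unset Strict Implicit. Unset Printing Implicit Defensive.
Import GRing.Theory.
Local Open Scope ring_scope.

(* The first Weyl algebra A = K[Y][X; id, d/dY] is represented (as a K-vector
   space) by {poly {poly K}}: an element  sum_i p_i(Y) X^i  is the polynomial
   in the outer variable X whose i-th coefficient is p_i in {poly K}.
   The multiplication is NOT the one of {poly {poly K}}, but the Weyl product:
   p(Y) X^m . q(Y) X^n = sum_{i=0}^m C(m,i) p q^{(m-i)} X^{i+n}, extended
   bilinearly. *)
Definition weyl_mul (K : fieldType) (u v : {poly {poly K}}) : {poly {poly K}} :=
  \sum_(m < size u) \sum_(n < size v) \sum_(i < m.+1)
     ((('C(m, i))%:R * u`_m * (v`_n)^`(m - i))%:P * 'X^(i + n)).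

Definition weyl_alpha (K : fieldType) (k : K) (u : {poly {poly K}}) : {poly {poly K}} :=
  map_poly (fun p : {poly K} => p \Po ('X + k%:P)) u.

Definition hom_mul (K : fieldType) (k : K) (u v : {poly {poly K}}) : {poly {poly K}} :=
  weyl_alpha k (weyl_mul u v).

Definition hom_ideal (K : fieldType) (k : K) (I : pred {poly {poly K}}) : Prop :=
  [/\ 0 \in I,
      (forall x y, x \in I -> y \in I -> x - y \in I),
      (forall a x, x \in I -> hom_mul k a x \in I)
    & (forall a x, x \in I -> hom_mul k x a \in I)].

(* Main.v *)
Require Import Defs.
From HB Require Import structures.
From mathcomp Require Import all_boot all_order all_algebra.
From mathcomp Require Import zify ring.
Set Implicit Arguments. Unset Strict Implicit. Unset Printing Implicit Defensive.
Import GRing.Theory.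
Local Open Scope ring_scope.

Section W.
Variable K : fieldType.
Implicit Types u v x : {poly {poly K}}.

Lemma sum_map (f : {poly K} -> {poly K}) v : f 0 = 0 ->
  \sum_(n < size v) (f v`_n)%:P * 'X^n = map_poly f v.
Proof.
move=> f0; rewrite /map_poly poly_def; apply: eq_bigr => i _.
by rewrite mul_polyC.
Qed.

Lemma sum_id v : \sum_(n < size v) (v`_n)%:P * 'X^n = v.
Proof. by rewrite (sum_map (f := id)) // map_poly_id. Qed.

Definition Yc : {poly {poly K}} := ('X : {poly K})%:P.

Lemma mulYl v : weyl_mul Yc v = Yc * v.
Proof.
rewrite /weyl_mul /Yc size_polyC polyX_eq0 /= big_ord1.
rewrite -[in RHS](sum_id v) mulr_sumr; apply: eq_bigr => n _.
by rewrite big_ord1 coefC /= bin0 mul1r polyCM add0n mulrA.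
Qed.

Lemma mulXl v : weyl_mul 'X v = map_poly (@deriv _) v + 'X * v.
Proof.
rewrite /weyl_mul size_polyX big_ord_recl big_ord1 /=.
rewrite big1 ?add0r; last first.
  move=> n _; rewrite big_ord1 coefX /= mulr0 mul0r polyC0 mul0r //.
rewrite -(sum_map v (f := @deriv _)) ?derivC // -[in X in _ = _ + X](sum_id v).
rewrite mulr_sumr -big_split /=; apply: eq_bigr => n _.
rewrite big_ord_recl big_ord1 /= coefX /= /bump /= bin0 binn !mulr1 !mul1r.
by rewrite add0n add1n exprS mulrCA.
Qed.

Lemma mulCr u (c : {poly K}) : c != 0 -> weyl_mul u c%:P =
  \sum_(m < size u) \sum_(i < m.+1) (('C(m, i))%:R * u`_m * c^`(m - i))%:P * 'X^i.
Proof.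
move=> c0; rewrite /weyl_mul size_polyC c0; apply: eq_bigr => m _.
by rewrite big_ord1; apply: eq_bigr => i _; rewrite coefC /= addn0.
Qed.

Lemma derivnX2 j : ('X : {poly K})^`(j.+2) = 0.
Proof.
elim: j => [|j IH]; last by rewrite derivnS IH -polyC0 derivC.
by rewrite derivnS derivn1 derivX -polyC1 derivC.
Qed.

Lemma mulYr u : weyl_mul u Yc = u * Yc + u^`().
Proof.
rewrite /Yc mulCr ?polyX_eq0 //.
rewrite -[in RHS](sum_id u) mulr_suml raddf_sum -big_split /=.
apply: eq_bigr => m _.
rewrite derivM derivC mul0r add0r derivXn.
case: (nat_of_ord m) => [|m'].
  by rewrite big_ord1 /= bin0 mulr0n mulr0 addr0 mul1r polyCM !expr0 !mulr1 mulrC.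
rewrite big_ord_recr big_ord_recr /= big1 ?add0r; last first.
  move=> i _ /=.
  have -> : (m'.+1 - i = (m' - i.+1).+2)%N by have := ltn_ord i; lia.
  by rewrite derivnX2 mulr0 polyC0 mul0r.
rewrite subSnn subnn binSn binn derivn1 derivX derivn0 mulr1 !mul1r.
rewrite !polyCM polyC_natr /Yc exprS; ring.
Qed.

Lemma mulCCr u (c : K) : c != 0 -> weyl_mul u (c%:P)%:P = u * (c%:P)%:P.
Proof.
move=> c0; rewrite mulCr ?polyC_eq0 //.
rewrite -[in RHS](sum_id u) mulr_suml; apply: eq_bigr => m _.
rewrite big_ord_recr /= big1 ?add0r; last first.
  move=> i _; rewrite derivnC subn_eq0 leqNgt ltn_ord /= mulr0 polyC0 mul0r //.
by rewrite subnn derivn0 binn mul1r polyCM mulrAC.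
Qed.

Lemma mulXr u : weyl_mul u 'X = u * 'X.
Proof.
rewrite /weyl_mul size_polyX -[in RHS](sum_id u) mulr_suml; apply: eq_bigr => m _.
rewrite big_ord_recl big_ord1 /= big1 ?add0r; last first.
  by move=> i _; rewrite coefX /= -polyC0 derivnC; case: ifP; rewrite !(mulr0, polyC0, mul0r).
rewrite big_ord_recr /= big1 ?add0r; last first.
  move=> i _; rewrite coefX /= -polyC1 derivnC subn_eq0 leqNgt ltn_ord /= mulr0 polyC0 mul0r //.
by rewrite coefX /= subnn derivn0 binn !mulr1 mul1r /bump /= add1n addn1 exprS (mulrC 'X) mulrA.
Qed.

Variable k : K.
Definition Q : {poly K} := 'X + k%:P.

Lemma alphaE u : weyl_alpha k u = map_poly (comp_poly Q) u.
Proof. by []. Qed.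

Lemma alphaB u v : weyl_alpha k (u - v) = weyl_alpha k u - weyl_alpha k v.
Proof. by rewrite !alphaE raddfB. Qed.

Lemma sizeQ : size Q = 2.
Proof. by rewrite /Q size_XaddC. Qed.

Lemma size_alpha u : size (weyl_alpha k u) = size u.
Proof.
rewrite alphaE; have [->|u0] := eqVneq u 0; first by rewrite map_poly0.
apply: size_map_poly_id0.
by rewrite -size_poly_eq0 size_comp_poly2 ?sizeQ // size_poly_eq0 lead_coef_eq0.
Qed.

Lemma alphaC q : weyl_alpha k q%:P = (q \Po Q)%:P.
Proof. by rewrite alphaE map_polyC. Qed.

Lemma alphaK b : weyl_alpha k (weyl_alpha (- k) b) = b.
Proof.
rewrite /weyl_alpha -map_poly_comp_id0 ?comp_poly0 //.
apply/polyP => i; rewrite coef_map_id0 ?comp_poly0 //=.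
have := comp_polyXaddC_K b`_i (- k).
by rewrite polyCN opprK -polyCN.
by rewrite !comp_poly0.
Qed.
End W.

Section Ideal.
Variables (K : fieldType) (charK0 : [pchar K] =i pred0) (k : K).
Variables (I : pred {poly {poly K}}) (hI : hom_ideal k I).

Lemma natK_neq0 n : (n > 0)%N -> (n%:R : K) != 0.
Proof. by move=> n0; rewrite (pcharf0P _).1 // -lt0n. Qed.

Lemma derivK_neq0 (q : {poly K}) : (1 < size q)%N -> q^`() != 0.
Proof.
move=> sq; apply/eqP => /polyP/(_ (size q).-2).
rewrite coef_deriv coef0 -mulr_natr; have -> : (size q).-2.+1 = (size q).-1 by case: (size q) sq => [|[|n]].
move/eqP; rewrite mulf_eq0 (negbTE (natK_neq0 _)) ?orbF; last by case: (size q) sq => [|[|n]].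
by rewrite -lead_coefE lead_coef_eq0 -size_poly_eq0; case: (size q) sq.
Qed.

Lemma derivKK_neq0 (q : {poly {poly K}}) : (1 < size q)%N -> q^`() != 0.
Proof.
move=> sq; apply/eqP => /polyP/(_ (size q).-2).
rewrite coef_deriv coef0 -mulr_natr; have -> : (size q).-2.+1 = (size q).-1 by case: (size q) sq => [|[|n]].
move/eqP; rewrite mulf_eq0 -polyC_natr polyC_eq0 (negbTE (natK_neq0 _)) ?orbF; last by case: (size q) sq => [|[|n]].
by rewrite -lead_coefE lead_coef_eq0 -size_poly_eq0; case: (size q) sq.
Qed.

Lemma I_sub x y : x \in I -> y \in I -> x - y \in I.
Proof. by case: hI => _ h _ _; apply: h. Qed.

Lemma stepY x : x \in I -> weyl_alpha k x^`() \in I.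
Proof.
move=> xI; case: hI => _ _ hl hr.
have := I_sub (hr (Yc K) _ xI) (hl (Yc K) _ xI).
by rewrite /hom_mul -alphaB mulYr mulYl (mulrC (Yc K)) addrAC subrr add0r.
Qed.

Lemma stepX (q : {poly K}) : q%:P \in I -> (q^`() \Po Q k)%:P \in I.
Proof.
move=> xI; case: hI => _ _ hl hr.
have := I_sub (hl 'X _ xI) (hr 'X _ xI).
rewrite /hom_mul -alphaB mulXr mulXl (mulrC 'X) addrK map_polyC alphaC //.
Qed.

Lemma lemA n (q : {poly K}) : (size q <= n)%N -> q != 0 -> q%:P \in I ->
  exists c : K, c != 0 /\ (c%:P)%:P \in I.
Proof.
elim: n q => [|n IH] q sq q0 qI.
  by move: q0; rewrite -size_poly_eq0; case: (size q) sq.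
have [s1|s1] := leqP (size q) 1.
  exists q`_0; move/size1_polyC: (s1) => qe; split; last by rewrite -qe.
  by move: q0; rewrite {1}qe polyC_eq0.
have d0 := derivK_neq0 s1.
apply: (IH (q^`() \Po Q k)); last exact: stepX.
  rewrite size_comp_poly2 ?sizeQ //; move: (lt_size_deriv q0) => h; exact: leq_trans h sq.
by rewrite -size_poly_eq0 size_comp_poly2 ?sizeQ // size_poly_eq0.
Qed.

Lemma lemB n (x : {poly {poly K}}) : (size x <= n)%N -> x != 0 -> x \in I ->
  exists c : K, c != 0 /\ (c%:P)%:P \in I.
Proof.
elim: n x => [|n IH] x sx x0 xI.
  by move: x0; rewrite -size_poly_eq0; case: (size x) sx.
have [s1|s1] := leqP (size x) 1.
  move/size1_polyC: (s1) => xe; rewrite xe in xI.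
  apply: (lemA (leqnn _)) xI; by move: x0; rewrite {1}xe polyC_eq0.
apply: (IH (weyl_alpha k x^`())); last exact: stepY.
  rewrite size_alpha; move: (lt_size_deriv x0) => h; exact: leq_trans h sx.
by rewrite -size_poly_eq0 size_alpha size_poly_eq0 derivKK_neq0.
Qed.

End Ideal.

From Stdlib Require Import Classical.

Theorem mainTheorem11 (K : fieldType) (charK0 : [pchar K] =i pred0) (k : K)
  (I : pred {poly {poly K}}) (hI : hom_ideal k I) :
  (forall x, x \in I -> x = 0) \/ (forall x, x \in I).
Proof.
case: (classic (exists x, x \in I /\ x != 0)) => [[x [xI x0]]|H].
  right => b; have [c [c0 cI]] := lemB charK0 hI (leqnn _) x0 xI.
  case: hI => _ _ hl _.
  have := hl (weyl_alpha (- k) b * ((c^-1)%:P)%:P) _ cI.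
  by rewrite /hom_mul mulCCr // -mulrA -!polyCM mulVf // !polyC1 mulr1 alphaK.
left => x xI; case: (eqVneq x 0) => // x0; by exfalso; apply: H; exists x; split.
Qed.
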